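(* Let $r,s$ be real numbers with $s > 3\sqrt{3}\, r > 0$, and let $C_{r,s} \subset \mathbb{P}^2$ be the projective closure of the curve $s(xy - r^2) = x^2 y + x y^2$, i.e. $s(xyz - r^2 z^3) = x^2 y + x y^2$ in coordinates $[x,y,z]$; this is a nonsingular cubic. Equip its set of real points with the group law in which the identity is $[1,-1,0]$ and, for points $P,Q$, the sum $P+Q$ is the reflection in the line $y=x$ (i.e. $[x,y,z]\mapsto[y,x,z]$) of the third intersection point of $C_{r,s}$ with the line through $P$ and $Q$ (the tangent line if $P=Q$). Call a real point of $C_{r,s}$ a triangle point if it is an affine point $(x,y)$ with $x>0$ and $y>0$. Then the sum of two triangle points is not a triangle point, and the sum of a triangle point with a real point that is not a triangle point is a triangle point. Consequently, the sum of an odd number of triangle points is a triangle point, and the sum of an even number of triangle points is not a triangle point.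
   Context: The chord–tangent construction described (third intersection point followed by reflection in $y=x$, identity $[1,-1,0]$) defines the abelian group structure on the real points of $C_{r,s}$ used here. *)

(* Defs.v *)
From Stdlib Require Import Reals List.
Import ListNotations.
Open Scope R_scope.

(* Homogeneous coordinates [x,y,z] of a point of the real projective plane,
   represented by a (nonzero) vector of R^3. *)
Definition pt := (R * R * R)%type.

Definition Fcub (r s : R) (p : pt) : R :=
  let '(x, y, z) := p in s * (x * y * z - r ^ 2 * z ^ 3) - (x ^ 2 * y + x * y ^ 2).

Definition on_curve (r s : R) (p : pt) : Prop :=
  p <> (0, 0, 0) /\ Fcub r s p = 0.

Definition proj_eq (p q : pt) : Prop :=
  let '(x, y, z) := p in exists c, c <> 0 /\ q = (c * x, c * y, c * z).

Definition lin (l : pt) (p : pt) : R :=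
  let '(a, b, c) := l in let '(x, y, z) := p in a * x + b * y + c * z.

Definition indep (l m : pt) : Prop :=
  let '(a, b, c) := l in let '(a', b', c') := m in
  (b * c' - c * b', c * a' - a * c', a * b' - b * a') <> (0, 0, 0).

Definition quad (q : R * R * R * R * R * R) (p : pt) : R :=
  let '(a, b, c, d, e, f) := q in let '(x, y, z) := p in
  a * x * x + b * y * y + c * z * z + d * x * y + e * x * z + f * y * z.

(* P, Q, R are the three intersection points (with multiplicity) of C_{r,s}
   with a line {l = 0}: the restriction of F to the line equals a product of
   three linear forms vanishing respectively at P, Q, R (none of them vanishing
   identically on the line), i.e. F = lP lQ lR modulo l.  When P = Q this
   forces the line to be tangent at P. *)
Definition line_section (r s : R) (P Q Rp : pt) : Prop :=
  exists (l lP lQ lR : pt) (q : R * R * R * R * R * R),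
    lin l P = 0 /\ lin l Q = 0 /\ lin l Rp = 0 /\
    lin lP P = 0 /\ lin lQ Q = 0 /\ lin lR Rp = 0 /\
    indep l lP /\ indep l lQ /\ indep l lR /\
    forall p : pt, Fcub r s p = lin lP p * lin lQ p * lin lR p + lin l p * quad q p.

Definition swapxy (p : pt) : pt := let '(x, y, z) := p in (y, x, z).

Definition add_rel (r s : R) (P Q S : pt) : Prop :=
  on_curve r s P /\ on_curve r s Q /\
  exists Rp, on_curve r s Rp /\ line_section r s P Q Rp /\ proj_eq (swapxy Rp) S.

Inductive sum_rel (r s : R) : list pt -> pt -> Prop :=
  | sum_nil : forall c, c <> 0 -> sum_rel r s [] (c, - c, 0)
  | sum_cons : forall P l T S, sum_rel r s l T -> add_rel r s P T S ->
      sum_rel r s (P :: l) S.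

Definition triangle_pt (p : pt) : Prop :=
  let '(x, y, z) := p in z <> 0 /\ 0 < x / z /\ 0 < y / z.

(* Main.v *)
Require Import Defs.
From Stdlib Require Import Reals List Lra Lia Psatz Classical.
Import ListNotations.
Open Scope R_scope.


Lemma gneg r s a b : 0<s -> 0<r -> 0<=a -> 0<=b -> (a*b=0 \/ s <= a+b) -> Fcub r s (a,b,1) < 0.
Proof.
  intros Hs Hr Ha Hb H. unfold Fcub.
  assert (E: s * (a * b * 1 - r ^ 2 * 1 ^ 3) - (a ^ 2 * b + a * b ^ 2) = (a*b)*(s - (a+b)) - s*(r*r)) by ring.
  rewrite E. assert (0 < s*(r*r)) by (apply Rmult_lt_0_compat; nra). destruct H as [H|H].
  - rewrite H. lra.
  - assert (0 <= a*b) by nra. nra.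
Qed.

Lemma gzero r s a b : 0<s -> 0<r -> 0<=a -> 0<=b -> Fcub r s (a,b,1) = 0 -> 0<a /\ 0<b.
Proof.
  intros Hs Hr Ha Hb H.
  destruct (Req_dec (a*b) 0) as [E|E].
  - pose proof (gneg r s a b Hs Hr Ha Hb (or_introl E)). lra.
  - split; [destruct Ha as [|Ha]; [auto| subst; nra] | destruct Hb as [|Hb]; [auto|subst; nra]].
Qed.

Lemma hi_exists s a0 b0 d1 d2 K : 0<s -> 0<a0 -> 0<b0 -> (d1<>0 \/ d2<>0) -> 0<K ->
 exists h, 0 < h /\ (forall t, 0<=t<=h -> 0 <= a0+t*d1 /\ 0 <= b0+t*d2) /\
   ((a0+h*d1)*(b0+h*d2) = 0 \/ s <= (a0+h*d1)+(b0+h*d2)) /\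
   (forall t, 0<=t -> 0 < a0+t*d1 -> 0 < b0+t*d2 -> t < K -> t < h).
Proof.
  intros Hs Ha Hb Hd HK.
  destruct (Rlt_le_dec d1 0) as [D1|D1]; destruct (Rlt_le_dec d2 0) as [D2|D2].
  - destruct (Rle_dec (a0 * (-d2)) (b0 * (-d1))) as [C|C].
    + exists (a0/(-d1)). set (h := a0/(-d1)).
      assert (Eh: h*(-d1) = a0) by (unfold h; field; lra).
      assert (0<h) by nra.
      assert (h*(-d2) <= b0) by nra.
      split; [auto|split;[|split]].
      * intros t Ht. split; nra.
      * left. replace (a0 + h*d1) with 0 by lra. ring.
      * intros t _ H1 _ _. nra.
    + exists (b0/(-d2)). set (h := b0/(-d2)).
      assert (Eh: h*(-d2) = b0) by (unfold h; field; lra).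
      assert (0<h) by nra.
      assert (h*(-d1) <= a0) by nra.
      split; [auto|split;[|split]].
      * intros t Ht. split; nra.
      * left. replace (b0 + h*d2) with 0 by lra. ring.
      * intros t _ _ H1 _. nra.
  - exists (a0/(-d1)). set (h := a0/(-d1)).
    assert (Eh: h*(-d1) = a0) by (unfold h; field; lra).
    assert (0<h) by nra.
    split; [auto|split;[|split]].
    * intros t Ht. split; nra.
    * left. replace (a0 + h*d1) with 0 by lra. ring.
    * intros t _ H1 _ _. nra.
  - exists (b0/(-d2)). set (h := b0/(-d2)).
    assert (Eh: h*(-d2) = b0) by (unfold h; field; lra).
    assert (0<h) by nra.
    split; [auto|split;[|split]].
    * intros t Ht. split; nra.
    * left. replace (b0 + h*d2) with 0 by lra. ring.
    * intros t _ _ H1 _. nra.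
  - assert (Dp: 0 < d1 + d2) by (destruct Hd; lra).
    exists (K + s/(d1+d2)). set (h := K + s/(d1+d2)).
    assert (Eh: (h - K)*(d1+d2) = s) by (unfold h; field; lra).
    assert (0 < h - K) by nra.
    split; [lra|split;[|split]].
    * intros t Ht. split; nra.
    * right. nra.
    * intros; lra.
Qed.

Lemma tau_ex l1 l2 l3 a0 b0 x1 x2 x3 : l1*a0 + l2*b0 + l3 = 0 -> l1*x1+l2*x2+l3*x3 = 0 -> (l1<>0 \/ l2<>0) ->
  exists tau, x1 = x3*a0 + tau*l2 /\ x2 = x3*b0 + tau*(-l1).
Proof.
  intros H0 H1 H2.
  assert (E: l1*(x1 - x3*a0) + l2*(x2 - x3*b0) = 0).
  { replace l3 with (-(l1*a0+l2*b0)) in H1 by lra. lra. }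
  destruct (Req_dec l2 0) as [Z|Z].
  - assert (l1 <> 0) by (destruct H2; auto; contradiction).
    subst l2. exists (-(x2 - x3*b0)/l1). split.
    + assert (l1*(x1 - x3*a0) = 0) by lra.
      assert (x1 - x3*a0 = 0).
      { destruct (Rmult_integral _ _ H3); [contradiction|auto]. }
      lra.
    + field. auto.
  - exists ((x1 - x3*a0)/l2). split.
    + field. auto.
    + apply Rmult_eq_reg_l with l2; auto.
      field_simplify; auto. nra.
Qed.

Lemma cm_nonzero l1 l2 l3 n1 n2 n3 a0 b0 : l1*a0+l2*b0+l3 = 0 -> indep (l1,l2,l3) (n1,n2,n3) ->
  n1*a0 + n2*b0 + n3 = 0 -> n1*l2 + n2*(-l1) = 0 -> False.
Proof.
  intros H0 Hi H1 H2. apply Hi.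
  assert (E3: n3 = -(n1*a0+n2*b0)) by lra.
  assert (E4: l3 = -(l1*a0+l2*b0)) by lra.
  subst n3 l3.
  f_equal; [f_equal|].
  - replace (l2 * - (n1 * a0 + n2 * b0) - - (l1 * a0 + l2 * b0) * n2) with (a0 * (n1*l2 + n2*(-l1)) * (-1)) by ring.
    rewrite H2; ring.
  - replace (- (l1 * a0 + l2 * b0) * n1 - l1 * - (n1 * a0 + n2 * b0)) with (b0 * (n1*l2 + n2*(-l1)) * (-1)) by ring.
    rewrite H2; ring.
  - lra.
Qed.

Lemma core_single (l1 l2 l3 n1 n2 n3 x1 x2 x3 a0 b0 lo hi : R) :
  l1*a0+l2*b0+l3 = 0 -> l1*x1+l2*x2+l3*x3 = 0 -> n1*x1+n2*x2+n3*x3 = 0 ->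
  indep (l1,l2,l3) (n1,n2,n3) -> (x1,x2,x3) <> (0,0,0) -> (l1<>0 \/ l2<>0) -> lo < hi ->
  (forall t, lo <= t <= hi -> (n1*a0 + n2*b0 + n3) + (n1*l2 + n2*(-l1))*t = 0 ->
      0 < a0+t*l2 /\ 0 < b0+t*(-l1)) ->
  (forall t, 0 < a0+t*l2 -> 0 < b0+t*(-l1) -> t = -(n1*a0 + n2*b0 + n3)/(n1*l2 + n2*(-l1)) -> lo < t < hi) ->
  (((n1*a0 + n2*b0 + n3) + (n1*l2 + n2*(-l1))*lo) * ((n1*a0 + n2*b0 + n3) + (n1*l2 + n2*(-l1))*hi) < 0
   <-> triangle_pt (x1,x2,x3)).
Proof.
  intros Hl0 HlX HnX Hind HX Hl12 Hlh H1 H2.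
  set (c := n1*a0 + n2*b0 + n3) in *. set (m := n1*l2 + n2*(-l1)) in *.
  destruct (tau_ex l1 l2 l3 a0 b0 x1 x2 x3 Hl0 HlX Hl12) as [tau [E1 E2]].
  assert (Hlin: x3*c + tau*m = 0).
  { unfold c, m. rewrite E1, E2 in HnX. lra. }
  unfold triangle_pt. split.
  - intro Hneg.
    assert (Hm: m <> 0).
    { intro Z. rewrite Z in Hneg. nra. }
    set (t := -c/m).
    assert (Ec: c = -m*t) by (unfold t; field; auto).
    assert (Hp: m*m*((lo - t)*(hi-t)) < 0).
    { replace (m*m*((lo - t)*(hi-t))) with ((c+m*lo)*(c+m*hi)) by (rewrite Ec; ring). auto. }
    assert (Hmm: 0 < m*m) by nra.
    assert (Hlt: lo < t < hi).
    { assert ((lo-t)*(hi-t) < 0) by nra. split; nra. }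
    destruct (H1 t ltac:(lra) ltac:(rewrite Ec; ring)) as [HA HB].
    assert (Et: tau = x3*t).
    { apply Rmult_eq_reg_l with m; auto. rewrite Ec in Hlin. lra. }
    assert (Hx3: x3 <> 0).
    { intro Z. apply HX. rewrite Et in E1, E2. rewrite Z in E1, E2 |- *.
      rewrite E1, E2. repeat f_equal; ring. }
    split; [auto|split].
    + rewrite E1, Et. replace ((x3 * a0 + x3 * t * l2) / x3) with (a0 + t*l2) by (field; auto). auto.
    + rewrite E2, Et. replace ((x3 * b0 + x3 * t * - l1) / x3) with (b0 + t*(-l1)) by (field; auto). auto.
  - intros [Hx3 [HA HB]].
    set (t := tau/x3).
    assert (EA: x1/x3 = a0 + t*l2) by (unfold t; rewrite E1; field; auto).
    assert (EB: x2/x3 = b0 + t*(-l1)) by (unfold t; rewrite E2; field; auto).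
    assert (Hz: c + m*t = 0).
    { unfold t. apply Rmult_eq_reg_l with x3; auto. field_simplify; auto. lra. }
    assert (Hm: m <> 0).
    { intro Z. assert (Hc: c = 0) by (rewrite Z in Hz; lra).
      exact (cm_nonzero l1 l2 l3 n1 n2 n3 a0 b0 Hl0 Hind Hc Z). }
    assert (Et: t = -c/m) by (replace c with (-(m*t)) by lra; field; auto).
    destruct (H2 t ltac:(lra) ltac:(lra) Et) as [Ht1 Ht2].
    assert (Ec: c = -m*t) by lra.
    rewrite Ec.
    replace ((- m * t + m * lo) * (- m * t + m * hi)) with (m*m*((lo-t)*(hi-t))) by ring.
    assert (0 < m*m) by nra.
    assert ((lo-t)*(hi-t) < 0) by nra. nra.
Qed.

Lemma sign3 a b c : a < 0 -> 0 < a*b*c -> (b < 0 <-> ~ c < 0).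
Proof. intros Ha H. split; intros Hb.
  - intro Hc. assert (0 < a*b) by nra. nra.
  - destruct (Rlt_le_dec b 0) as [B|B]; auto. exfalso. apply Hb.
    destruct (Rle_lt_dec 0 c) as [C|C]; auto. assert (a*b <= 0) by nra. nra.
Qed.

Lemma prod6 a b c d e f : a*b*c < 0 -> d*e*f < 0 -> 0 < (a*d)*(b*e)*(c*f).
Proof. intros H1 H2. replace ((a*d)*(b*e)*(c*f)) with ((-(a*b*c))*(-(d*e*f))) by ring.
  apply Rmult_lt_0_compat; lra. Qed.

Lemma parity r s P Q Rp : 0<r -> 0<s -> on_curve r s P -> triangle_pt P -> on_curve r s Q ->
  on_curve r s Rp -> line_section r s P Q Rp -> (triangle_pt Q <-> ~ triangle_pt Rp).
Proof.
  intros Hr Hs HP TP HQ HR LS.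
  destruct P as [[p1 p2] p3], Q as [[q1 q2] q3], Rp as [[x1 x2] x3].
  destruct LS as (l & lP & lQ & lR & qq & HlP & HlQ & HlR & HuP & HvQ & HwR & IP & IQ & IR & Hfac).
  destruct l as [[l1 l2] l3]. destruct lP as [[u1 u2] u3]. destruct lQ as [[v1 v2] v3]. destruct lR as [[w1 w2] w3].
  unfold lin in HlP, HlQ, HlR, HuP, HvQ, HwR. cbv beta iota in HlP, HlQ, HlR, HuP, HvQ, HwR.
  destruct HP as [HP0 _]. destruct HQ as [HQ0 _]. destruct HR as [HR0 _].
  destruct TP as [Hp3 [Ha0 Hb0]].
  set (a0 := p1/p3) in *. set (b0 := p2/p3) in *.
  assert (Hl0: l1*a0 + l2*b0 + l3 = 0).
  { unfold a0, b0. replace (l1 * (p1 / p3) + l2 * (p2 / p3) + l3) with ((l1*p1+l2*p2+l3*p3)/p3) by (field; auto).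
    rewrite HlP. unfold Rdiv; ring. }
  assert (Hl12: l1 <> 0 \/ l2 <> 0).
  { destruct (Req_dec l1 0) as [Z1|Z1]; [|auto]. destruct (Req_dec l2 0) as [Z2|Z2]; [|auto].
    exfalso. assert (l3 = 0) by (subst; lra). subst. apply IP. repeat f_equal; ring. }
  set (cP := u1*a0 + u2*b0 + u3). set (mP := u1*l2 + u2*(-l1)).
  set (cQ := v1*a0 + v2*b0 + v3). set (mQ := v1*l2 + v2*(-l1)).
  set (cR := w1*a0 + w2*b0 + w3). set (mR := w1*l2 + w2*(-l1)).
  assert (Gid: forall t, Fcub r s (a0+t*l2, b0+t*(-l1), 1) = (cP + mP*t)*(cQ+mQ*t)*(cR+mR*t)).
  { intro t. rewrite Hfac. unfold lin. cbv beta iota.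
    replace (l1 * (a0 + t * l2) + l2 * (b0 + t * - l1) + l3 * 1) with (l1*a0+l2*b0+l3) by ring.
    rewrite Hl0. unfold cP, mP, cQ, mQ, cR, mR. ring. }
  set (K := 1 + Rabs (-cP/mP) + Rabs (-cQ/mQ) + Rabs (-cR/mR)).
  assert (HK: 0 < K) by (unfold K; pose proof (Rabs_pos (-cP/mP)); pose proof (Rabs_pos (-cQ/mQ));
     pose proof (Rabs_pos (-cR/mR)); lra).
  assert (Hd: l2 <> 0 \/ -l1 <> 0) by (destruct Hl12; [right|left]; lra).
  assert (Hd': -l2 <> 0 \/ - - l1 <> 0) by (destruct Hl12; [right|left]; lra).
  destruct (hi_exists s a0 b0 l2 (-l1) K Hs Ha0 Hb0 Hd HK) as [hi [Hh1 [Hh2 [Hh3 Hh4]]]].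
  destruct (hi_exists s a0 b0 (-l2) (- - l1) K Hs Ha0 Hb0 Hd' HK) as [h' [Hg1 [Hg2 [Hg3 Hg4]]]].
  set (lo := -h').
  assert (Hlh: lo < hi) by (unfold lo; lra).
  assert (Hnn: forall t, lo <= t <= hi -> 0 <= a0+t*l2 /\ 0 <= b0+t*(-l1)).
  { intros t Ht. destruct (Rle_dec 0 t).
    - apply Hh2; lra.
    - destruct (Hg2 (-t) ltac:(unfold lo in Ht; lra)) as [G1 G2].
      split; [replace (a0 + t*l2) with (a0 + -t * -l2) by ring | replace (b0 + t * -l1) with (b0 + -t * - - l1) by ring]; auto. }
  assert (Hin: forall t, 0 < a0+t*l2 -> 0 < b0+t*(-l1) -> Rabs t < K -> lo < t < hi).
  { intros t HA HB Ht. destruct (Rle_dec 0 t).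
    - rewrite Rabs_right in Ht by lra. pose proof (Hh4 t r0 HA HB Ht). unfold lo; lra.
    - rewrite Rabs_left in Ht by lra.
      assert (-t < h').
      { apply Hg4; lra. }
      unfold lo; lra. }
  assert (Ghi: Fcub r s (a0+hi*l2, b0+hi*(-l1), 1) < 0).
  { destruct (Hh2 hi ltac:(lra)). apply gneg; auto. }
  assert (Glo: Fcub r s (a0+lo*l2, b0+lo*(-l1), 1) < 0).
  { unfold lo. replace (a0 + - h' * l2) with (a0 + h' * -l2) by ring.
    replace (b0 + - h' * - l1) with (b0 + h' * - - l1) by ring.
    destruct (Hg2 h' ltac:(lra)). apply gneg; auto. }
  assert (H1: forall t, lo <= t <= hi -> (cP + mP*t)*(cQ+mQ*t)*(cR+mR*t) = 0 ->
      0 < a0+t*l2 /\ 0 < b0+t*(-l1)).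
  { intros t Ht Hz. destruct (Hnn t Ht). apply (gzero r s); auto. rewrite Gid; auto. }
  assert (Kb: forall c m, Rabs (-c/m) <= Rabs (-cP/mP) + Rabs (-cQ/mQ) + Rabs (-cR/mR) -> forall t, 0 < a0+t*l2 -> 0 < b0+t*(-l1) -> t = -c/m -> lo < t < hi).
  { intros c m Hc t HA HB Et. apply Hin; auto. subst t. unfold K; lra. }
  pose proof (Rabs_pos (-cP/mP)). pose proof (Rabs_pos (-cQ/mQ)). pose proof (Rabs_pos (-cR/mR)).
  assert (CP: ((cP + mP*lo)*(cP+mP*hi) < 0 <-> triangle_pt (p1,p2,p3))).
  { apply (core_single l1 l2 l3 u1 u2 u3 p1 p2 p3 a0 b0 lo hi Hl0 HlP HuP IP HP0 Hl12 Hlh).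
    - intros t Ht Hz. apply H1; auto. change (cP + mP*t = 0) in Hz. rewrite Hz. ring.
    - apply (Kb cP mP). lra. }
  assert (CQ: ((cQ + mQ*lo)*(cQ+mQ*hi) < 0 <-> triangle_pt (q1,q2,q3))).
  { apply (core_single l1 l2 l3 v1 v2 v3 q1 q2 q3 a0 b0 lo hi Hl0 HlQ HvQ IQ HQ0 Hl12 Hlh).
    - intros t Ht Hz. apply H1; auto. change (cQ + mQ*t = 0) in Hz. rewrite Hz. ring.
    - apply (Kb cQ mQ). lra. }
  assert (CR: ((cR + mR*lo)*(cR+mR*hi) < 0 <-> triangle_pt (x1,x2,x3))).
  { apply (core_single l1 l2 l3 w1 w2 w3 x1 x2 x3 a0 b0 lo hi Hl0 HlR HwR IR HR0 Hl12 Hlh).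
    - intros t Ht Hz. apply H1; auto. change (cR + mR*t = 0) in Hz. rewrite Hz. ring.
    - apply (Kb cR mR). lra. }
  assert (TP: triangle_pt (p1,p2,p3)) by (split; auto).
  apply CP in TP.
  rewrite Gid in Ghi, Glo.
  set (rP := (cP + mP*lo)*(cP+mP*hi)) in *.
  set (rQ := (cQ + mQ*lo)*(cQ+mQ*hi)) in *.
  set (rR := (cR + mR*lo)*(cR+mR*hi)) in *.
  pose proof (prod6 _ _ _ _ _ _ Glo Ghi) as Hprod.
  apply (sign3 _ _ _ TP) in Hprod. rewrite <- CQ, <- CR. exact Hprod.
Qed.

Lemma swap_tri Rp S : proj_eq (swapxy Rp) S -> (triangle_pt S <-> triangle_pt Rp).
Proof.
  destruct Rp as [[x y] z]. unfold proj_eq, swapxy. intros [c [Hc E]]. subst S.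
  unfold triangle_pt. split.
  - intros [H1 [H2 H3]]. assert (z <> 0) by (intro Z; apply H1; rewrite Z; ring).
    replace (c*y/(c*z)) with (y/z) in H2 by (field; auto).
    replace (c*x/(c*z)) with (x/z) in H3 by (field; auto). auto.
  - intros [H1 [H2 H3]]. split; [apply Rmult_integral_contrapositive; auto|].
    replace (c*y/(c*z)) with (y/z) by (field; auto).
    replace (c*x/(c*z)) with (x/z) by (field; auto). auto.
Qed.

Lemma add_tri r s P Q S : 0 < r -> 0 < s -> triangle_pt P -> add_rel r s P Q S ->
  (triangle_pt Q <-> ~ triangle_pt S).
Proof.
  intros Hr Hs TP [HP [HQ [Rp [HR [LS PE]]]]].
  rewrite (swap_tri _ _ PE). apply (parity r s P Q Rp); auto.
Qed.

Theorem theorem2 (r s : R) (hr : 0 < 3 * sqrt 3 * r) (hs : 3 * sqrt 3 * r < s) :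
  (forall P Q S : pt, on_curve r s P -> triangle_pt P -> on_curve r s Q -> triangle_pt Q ->
     add_rel r s P Q S -> ~ triangle_pt S) /\
  (forall P Q S : pt, on_curve r s P -> triangle_pt P -> on_curve r s Q -> ~ triangle_pt Q ->
     add_rel r s P Q S -> triangle_pt S) /\
  (forall (l : list pt) (S : pt), Forall (fun P => on_curve r s P /\ triangle_pt P) l ->
     sum_rel r s l S -> (triangle_pt S <-> Nat.odd (length l) = true)).
Proof.
  assert (H3: 0 < sqrt 3) by (apply sqrt_lt_R0; lra).
  assert (Hr: 0 < r).
  { destruct (Rle_lt_dec r 0) as [H|H]; auto. assert (3 * sqrt 3 * r <= 0); [|lra].
    assert (0 < 3*sqrt 3) by lra. nra. }
  assert (Hs: 0 < s) by lra.
  split; [|split].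
  - intros P Q S _ TP _ TQ A. apply (add_tri r s P Q S Hr Hs TP A). auto.
  - intros P Q S _ TP _ TQ A. destruct (classic (triangle_pt S)) as [T|T]; auto.
    exfalso. apply TQ. apply (add_tri r s P Q S Hr Hs TP A). auto.
  - intros l S HF HS. induction HS as [c Hc | P l T S HT IH A].
    + simpl. unfold triangle_pt. split; [intros [H _]; lra | discriminate].
    + inversion HF as [|? ? [_ TP] HF']. subst.
      specialize (IH HF'). simpl length. rewrite Nat.odd_succ, <- Nat.negb_odd.
      pose proof (add_tri r s P T S Hr Hs TP A) as E.
      destruct (Nat.odd (length l)); simpl.
      * split; [|discriminate]. intro TS. exfalso. apply (proj1 E (proj2 IH eq_refl)). auto.
      * split; [reflexivity|]. intros _. destruct (classic (triangle_pt S)) as [T'|T']; auto.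
        exfalso. apply (proj2 E) in T'. apply (proj1 IH) in T'. discriminate.
Qed.
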